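(* Let $a\in[0,\infty)$ and let $t:[0,1]\to[0,\infty]$ and $s:[0,\infty]\to[0,1]$ be continuous and increasing functions such that (1) $t(x)=\infty$ if and only if $x=1$; (2) $t(x)=\frac{a}{2}$ if and only if $x=0$; (3) $s(x)=0$ if and only if $x\in[0,a]$; (4) $s(x)=1$ if and only if $x=\infty$. Then the function $G_{t,s}:[0,1]^2\to[0,1]$ defined by $G_{t,s}(x,y)=s(t(x)+t(y))$ is a grouping function.
   Context: ''Increasing'' means non-decreasing. Arithmetic in $[0,\infty]$ uses $c+\infty=\infty$; continuity on $[0,\infty]$ refers to the usual topology of the extended half-line. A grouping function is a map $G:[0,1]^2\to[0,1]$ that is (G1) commutative, (G2) $G(x,y)=0$ iff $x=y=0$, (G3) $G(x,y)=1$ iff $x=1$ or $y=1$, (G4) increasing in each variable, (G5) continuous. *)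

(* Defs.v *)
From HB Require Import structures.
From mathcomp Require Import all_boot all_order all_algebra.
From mathcomp Require Import all_classical all_reals all_analysis.
Set Implicit Arguments. Unset Strict Implicit. Unset Printing Implicit Defensive.
Import Order.TTheory GRing.Theory Num.Theory.
Import numFieldNormedType.Exports.
Local Open Scope classical_set_scope.
Local Open Scope ring_scope.

Definition unit_itv (R : realType) : set R := [set x | 0 <= x <= 1].
Arguments unit_itv : clear implicits.

(* A grouping function G : [0,1]^2 -> [0,1], represented as a function
   R -> R -> R whose behaviour is only constrained on [0,1]^2. *)
Definition grouping_function (R : realType) (G : R -> R -> R) : Prop :=
  (forall x y, x \in unit_itv R -> y \in unit_itv R -> 0 <= G x y <= 1) /\
  (forall x y, x \in unit_itv R -> y \in unit_itv R -> G x y = G y x) /\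
  (forall x y, x \in unit_itv R -> y \in unit_itv R ->
     (G x y = 0 <-> (x = 0 /\ y = 0))) /\
  (forall x y, x \in unit_itv R -> y \in unit_itv R ->
     (G x y = 1 <-> (x = 1 \/ y = 1))) /\
  (forall x x' y, x \in unit_itv R -> x' \in unit_itv R -> y \in unit_itv R ->
     x <= x' -> G x y <= G x' y) /\
  (forall x y y', x \in unit_itv R -> y \in unit_itv R -> y' \in unit_itv R ->
     y <= y' -> G x y <= G x y') /\
  {within [set p : R * R | p.1 \in unit_itv R /\ p.2 \in unit_itv R],
     continuous (fun p : R * R => G p.1 p.2)}.

(* Main.v *)
Require Import Defs.
From HB Require Import structures.
From mathcomp Require Import all_boot all_order all_algebra.
From mathcomp Require Import all_classical all_reals all_analysis.
From mathcomp Require Import lra.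
Import Order.TTheory GRing.Theory Num.Theory.
Import numFieldNormedType.Exports.
Local Open Scope classical_set_scope.
Local Open Scope ring_scope.

Lemma within_comp {T U V : topologicalType} (A : set T) (B : set U)
  (f : T -> U) (g : U -> V) (x : T) :
  f @ within A (nbhs x) --> f x -> (forall y, A y -> B (f y)) ->
  g @ within B (nbhs (f x)) --> g (f x) ->
  (g \o f) @ within A (nbhs x) --> g (f x).
Proof.
move=> cf AB cg N /cg hN.
have h := cf _ hN.

have h' : \forall z \near within A (nbhs x), B (f z) -> N (g (f z)) := h.
suff : \forall z \near within A (nbhs x), N ((g \o f) z) by [].
near=> z.
have Az : A z by near: z; exact: near_withinT.
have H : B (f z) -> N (g (f z)) by near: z; exact: h'.
exact: H (AB _ Az).
Unshelve. all: by end_near.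
Qed.

Theorem theorem6p2 (R : realType) (a : R) (t : R -> \bar R) (s : \bar R -> R)
  (ha : 0 <= a)
  (* t : [0,1] -> [0,oo], continuous and increasing *)
  (t_range : forall x, x \in unit_itv R -> (0 <= t x)%E)
  (t_incr : forall x y, x \in unit_itv R -> y \in unit_itv R ->
     x <= y -> (t x <= t y)%E)
  (t_cont : {within unit_itv R, continuous t})
  (* s : [0,oo] -> [0,1], continuous and increasing *)
  (s_range : forall x : \bar R, (0 <= x)%E -> 0 <= s x <= 1)
  (s_incr : forall x y : \bar R, (0 <= x)%E -> (0 <= y)%E ->
     (x <= y)%E -> s x <= s y)
  (s_cont : {within [set x : \bar R | (0 <= x)%E], continuous s})
  (h1 : forall x, x \in unit_itv R -> (t x = +oo%E <-> x = 1))
  (h2 : forall x, x \in unit_itv R -> (t x = (a / 2)%:E <-> x = 0))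
  (h3 : forall x : \bar R, (0 <= x)%E -> (s x = 0 <-> (x <= a%:E)%E))
  (h4 : forall x : \bar R, (0 <= x)%E -> (s x = 1 <-> x = +oo%E)) :
  grouping_function (fun x y => s (t x + t y)%E).

Proof.
have U0 : (0:R) \in unit_itv R by rewrite inE /unit_itv /= lexx ler01.
have t0 : t 0 = (a / 2)%:E by apply/h2.
have tcase : forall x, x \in unit_itv R ->
   (x = 1 /\ t x = +oo%E) \/
   (x != 1 /\ exists r, t x = r%:E /\ a / 2 <= r /\ (r = a / 2 <-> x = 0)).
  move=> x Ux.
  have ge : ((a/2)%:E <= t x)%E.
    rewrite -t0; apply: t_incr => //; move: Ux; rewrite inE /unit_itv /=.
    by case/andP.
  case Etx: (t x) => [r| |].
  - right; split.
      apply/eqP => x1; move: (proj2 (h1 x Ux) x1); by rewrite Etx.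
    exists r; split => //; split; first by rewrite Etx lee_fin in ge.
    split; first by move=> ra; apply/h2 => //; rewrite Etx ra.
    by move=> x0; have := proj2 (h2 x Ux) x0; rewrite Etx => -[].
  - by left; split => //; apply/h1.
  - by have := t_range x Ux; rewrite Etx.
have tge0 : forall x y, x \in unit_itv R -> y \in unit_itv R -> (0 <= t x + t y)%E.
  by move=> x y Ux Uy; apply: adde_ge0; apply: t_range.
split; first by move=> x y Ux Uy; apply: s_range; apply: tge0.
split; first by move=> x y Ux Uy /=; rewrite addeC.
split.
  move=> x y Ux Uy /=; rewrite h3; last exact: tge0.
  have tyN : t y != -oo%E by apply: contraTneq (t_range y Uy) => ->.
  case: (tcase x Ux) => [[x1 ->]|[x1 [r [-> [rge rE]]]]].
    rewrite addye // leye_eq /=.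
    split => // -[x0 _]; by move: x1; rewrite x0 => /eqP; rewrite eq_sym oner_eq0.
  case: (tcase y Uy) => [[y1 ->]|[y1 [q [-> [qge qE]]]]].
    rewrite addey // leye_eq /=.
    split => // -[_ y0]; by move: y1; rewrite y0 => /eqP; rewrite eq_sym oner_eq0.
  rewrite -EFinD lee_fin; split.
    move=> h; split; [apply/rE|apply/qE]; lra.
  by move=> [/rE -> /qE ->]; lra.
split.
  move=> x y Ux Uy /=; rewrite h4; last exact: tge0.
  have tyN : t y != -oo%E by apply: contraTneq (t_range y Uy) => ->.
  case: (tcase x Ux) => [[x1 ->]|[x1 [r [-> [rge rE]]]]].
    by rewrite addye //; split => // _; left.
  case: (tcase y Uy) => [[y1 ->]|[y1 [q [-> [qge qE]]]]].
    by rewrite addey //; split => // _; right.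
  by split => // -[] /eqP; rewrite ?(negbTE x1) ?(negbTE y1).
split.
  move=> x x' y Ux Ux' Uy xx' /=; apply: s_incr; try exact: tge0.
  by apply: leeD => //; exact: t_incr.
split.
  move=> x y y' Ux Uy Uy' yy' /=; apply: s_incr; try exact: tge0.
  by apply: leeD => //; exact: t_incr.
apply/subspace_continuousP => -[p1 p2] /= [Up1 Up2].
set S := [set p : R * R | p.1 \in unit_itv R /\ p.2 \in unit_itv R].
have ct := proj1 (subspace_continuousP _ _) t_cont.
have c1 : (fun q : R * R => t q.1) @ within S (nbhs (p1, p2)) --> t p1.
  apply: (@within_comp _ _ _ S (unit_itv R) fst t (p1, p2)).
  - apply: (cvg_trans (cvg_fmap2 (cvg_within S))).
    move=> N hN; exact: (@cvg_fst _ _ (nbhs p1) (nbhs p2) _ N hN).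
  - by move=> q [] + _; rewrite inE.
  - by apply: ct; move: Up1; rewrite inE.
have c2 : (fun q : R * R => t q.2) @ within S (nbhs (p1, p2)) --> t p2.
  apply: (@within_comp _ _ _ S (unit_itv R) snd t (p1, p2)).
  - apply: (cvg_trans (cvg_fmap2 (cvg_within S))).
    move=> N hN; exact: (@cvg_snd _ _ (nbhs p1) (nbhs p2) _ N hN).
  - by move=> q [] _; rewrite inE.
  - by apply: ct; move: Up2; rewrite inE.
apply: (@within_comp _ _ _ S [set x : \bar R | (0 <= x)%E]
          (fun q => t q.1 + t q.2)%E s (p1, p2)).
- apply: cvgeD => //; apply: ge0_adde_def; rewrite inE; exact: t_range.
- by move=> q [U1 U2]; exact: tge0.
- apply: (proj1 (subspace_continuousP _ _) s_cont); exact: tge0.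
Qed.
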